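(* Let $T$ be a quaternion tensor of size $2\times2\times3$ (two frontal slices, each a $2\times3$ quaternion matrix) or of size $3\times2\times2$ (two frontal slices, each a $3\times2$ quaternion matrix). Then $\mathrm{rank}(T)\le3$.
   Context: $\mathbb{H}$ denotes the real quaternions. An $n_1\times n_2\times n_3$ quaternion tensor is an array $T=(T_{ijk})$ with entries in $\mathbb{H}$, $1\le i\le n_1$, $1\le j\le n_2$, $1\le k\le n_3$; it is written $T=(A_1;\dots;A_{n_2})$ where the frontal slice $A_j$ is the $n_1\times n_3$ matrix $(T_{ijk})_{i,k}$. A nonzero tensor is simple if $T_{ijk}=a_ib_jc_k$ (quaternion product in this order) for some $\vec a\in\mathbb{H}^{n_1},\vec b\in\mathbb{H}^{n_2},\vec c\in\mathbb{H}^{n_3}$. The rank of $T$ is the least number of simple tensors summing to $T$ (the zero tensor has rank $0$). *)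

(* Defs.v *)
From mathcomp Require Import all_boot all_order all_algebra.
From mathcomp Require Import reals.
Set Implicit Arguments. Unset Strict Implicit. Unset Printing Implicit Defensive.
Import Order.TTheory GRing.Theory Num.Theory.
Local Open Scope ring_scope.

(* Real quaternion q0 + q1 i + q2 j + q3 k *)
Record quat (R : realType) := Quat { q0 : R; q1 : R; q2 : R; q3 : R }.

Definition qzero (R : realType) : quat R := Quat 0 0 0 0.

Definition qadd (R : realType) (p q : quat R) : quat R :=
  Quat (q0 p + q0 q) (q1 p + q1 q) (q2 p + q2 q) (q3 p + q3 q).

Definition qmul (R : realType) (p q : quat R) : quat R :=
  Quat (q0 p * q0 q - q1 p * q1 q - q2 p * q2 q - q3 p * q3 q)
       (q0 p * q1 q + q1 p * q0 q + q2 p * q3 q - q3 p * q2 q)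
       (q0 p * q2 q - q1 p * q3 q + q2 p * q0 q + q3 p * q1 q)
       (q0 p * q3 q + q1 p * q2 q - q2 p * q1 q + q3 p * q0 q).

Definition qtensor (R : realType) (n1 n2 n3 : nat) :=
  'I_n1 -> 'I_n2 -> 'I_n3 -> quat R.

Definition qtensor_zero (R : realType) n1 n2 n3 : qtensor R n1 n2 n3 :=
  fun _ _ _ => qzero R.

Definition simple_qtensor (R : realType) n1 n2 n3 (T : qtensor R n1 n2 n3) : Prop :=
  T <> @qtensor_zero R n1 n2 n3 /\
  exists (a : 'I_n1 -> quat R) (b : 'I_n2 -> quat R) (c : 'I_n3 -> quat R),
    forall i j k, T i j k = qmul (qmul (a i) (b j)) (c k).

Definition sum_of_simple (R : realType) n1 n2 n3 (T : qtensor R n1 n2 n3) (r : nat) : Prop :=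
  exists S : 'I_r -> qtensor R n1 n2 n3,
    (forall l, simple_qtensor (S l)) /\
    forall i j k, T i j k = \big[@qadd R/qzero R]_(l < r) S l i j k.

Definition qrank_le (R : realType) n1 n2 n3 (T : qtensor R n1 n2 n3) (m : nat) : Prop :=
  exists r, (r <= m)%N /\ sum_of_simple T r.

(* Main.v *)
Require Import Defs.
From HB Require Import structures.
From mathcomp Require Import all_boot all_order all_algebra.
From mathcomp Require Import reals ring lra.
From Stdlib Require Import Classical_Prop.
Set Implicit Arguments. Unset Strict Implicit. Unset Printing Implicit Defensive.
Import Order.TTheory GRing.Theory Num.Theory.
Local Open Scope ring_scope.

Section QR.
Variable R : realType.
Definition qto (q : quat R) := (q0 q, q1 q, q2 q, q3 q).
Definition qof (x : R * R * R * R) := let: (a, b, c, d) := x in Quat a b c d.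
Lemma qtoK : cancel qto qof. Proof. by case. Qed.
HB.instance Definition _ := Equality.copy (quat R) (can_type qtoK).
HB.instance Definition _ := Choice.copy (quat R) (can_type qtoK).
Definition qopp (p : quat R) := Quat (- q0 p) (- q1 p) (- q2 p) (- q3 p).
Definition qone := Quat (1 : R) 0 0 0.
Lemma quat_ext (p q : quat R) : q0 p = q0 q -> q1 p = q1 q -> q2 p = q2 q -> q3 p = q3 q -> p = q.
Proof. by case: p => ????; case: q => ???? /= -> -> -> ->. Qed.
Ltac qr := rewrite /associative /commutative /left_id /right_id /left_inverse /left_distributive /right_distributive; intros; repeat match goal with x : quat R |- _ => destruct x end;
  apply: quat_ext => /=; ring.
Lemma qaddA : associative (@qadd R). Proof. rewrite /qadd; qr. Qed.
Lemma qaddC : commutative (@qadd R). Proof. rewrite /qadd; qr. Qed.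
Lemma qadd0 : left_id (qzero R) (@qadd R). Proof. rewrite /qadd; qr. Qed.
Lemma qaddN : left_inverse (qzero R) qopp (@qadd R). Proof. rewrite /qadd; qr. Qed.
Lemma qmulA : associative (@qmul R). Proof. rewrite /qmul; qr. Qed.
Lemma qmul1 : left_id qone (@qmul R). Proof. rewrite /qmul; qr. Qed.
Lemma qmulr1 : right_id qone (@qmul R). Proof. rewrite /qmul; qr. Qed.
Lemma qmulDl : left_distributive (@qmul R) (@qadd R). Proof. rewrite /qmul /qadd; qr. Qed.
Lemma qmulDr : right_distributive (@qmul R) (@qadd R). Proof. rewrite /qmul /qadd; qr. Qed.
Lemma qone0 : qone != qzero R.
Proof. apply/eqP => /(congr1 (@q0 R)) /= /eqP; by rewrite oner_eq0. Qed.
HB.instance Definition _ := GRing.isNzRing.Build (quat R) qaddA qaddC qadd0 qaddN qmulA qmul1 qmulr1 qmulDl qmulDr qone0.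
Definition qn (q : quat R) := q0 q ^+ 2 + q1 q ^+ 2 + q2 q ^+ 2 + q3 q ^+ 2.
Definition qinv (q : quat R) := Quat (q0 q / qn q) (- q1 q / qn q) (- q2 q / qn q) (- q3 q / qn q).
Definition qunit := fun q : quat R => q != 0.
Lemma qn0 q : q != 0 -> qn q != 0.
Proof.
case: q => a b c d H; apply/negP => /eqP Hn; move/eqP: H; apply.
rewrite /qn /= in Hn.
have := sqr_ge0 a; have := sqr_ge0 b; have := sqr_ge0 c; have := sqr_ge0 d => Hd Hc Hb Ha.
have ha : a ^+ 2 = 0 by lra.
have hb : b ^+ 2 = 0 by lra.
have hc : c ^+ 2 = 0 by lra.
have hd : d ^+ 2 = 0 by lra.
move: ha hb hc hd => /eqP; rewrite sqrf_eq0 => /eqP -> /eqP; rewrite sqrf_eq0 => /eqP -> /eqP; rewrite sqrf_eq0 => /eqP -> /eqP; rewrite sqrf_eq0 => /eqP ->; by [].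
Qed.
Lemma qmulV : {in qunit, left_inverse 1 qinv *%R}.
Proof.
move=> q Hq; have := qn0 Hq; case: q Hq => a b c d _; rewrite /qn /= => Hn.
apply: quat_ext => /=; rewrite /qn /=; field; done.
Qed.
Lemma qmulrV : {in qunit, right_inverse 1 qinv *%R}.
Proof.
move=> q Hq; have := qn0 Hq; case: q Hq => a b c d _; rewrite /qn /= => Hn.
apply: quat_ext => /=; rewrite /qn /=; field; done.
Qed.
Lemma qunitP : forall x y : quat R, y * x = 1 /\ x * y = 1 -> qunit x.
Proof.
move=> x y [H _]; rewrite /qunit; apply/eqP => Hx; move: H; rewrite Hx mulr0 => /eqP.
by rewrite eq_sym oner_eq0.
Qed.
Lemma qinv_out : {in [predC qunit], qinv =1 id}.
Proof.
move=> x; rewrite inE /qunit negbK => /eqP ->.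
by apply: quat_ext; rewrite /= ?mul0r ?oppr0 ?mul0r.
Qed.
HB.instance Definition _ := GRing.NzRing_hasMulInverse.Build (quat R) qmulV qmulrV qunitP qinv_out.
Lemma qunitE (q : quat R) : (q \is a GRing.unit) = (q != 0). Proof. by []. Qed.

Lemma dep_lemma (D : unitRingType) (hD : forall x : D, x != 0 -> x \is a GRing.unit) :
  forall n m (v : 'I_m -> 'I_n -> D), (n < m)%N ->
  exists lam : 'I_m -> D, (exists i, lam i != 0) /\ forall k, \sum_i lam i * v i k = 0.
Proof.
elim=> [|n IH] m v Hnm.
  exists (fun _ => 1); split; last by case.
  by exists (Ordinal Hnm); rewrite oner_neq0.
case: m v Hnm => [|m] v Hnm //.
have [Hz|Hnz] := boolP [forall i, v i ord_max == 0].
  have Hnm' : (n < m.+1)%N by apply: ltnW.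
  have [lam [Hl Hs]] := IH _ (fun i k => v i (lift ord_max k)) Hnm'.
  exists lam; split=> // k; case: (unliftP ord_max k) => [k' ->|->]; first exact: Hs.
  by rewrite big1 // => i _; rewrite (eqP (forallP Hz i)) mulr0.
move/forallPn: Hnz => [i0 Hi0]; set c0 := v i0 ord_max in Hi0.
have Hu : c0 \is a GRing.unit by apply: hD.
pose w (i : 'I_m) (k : 'I_n) := v (lift i0 i) (lift ord_max k) -
   v (lift i0 i) ord_max * c0^-1 * v i0 (lift ord_max k).
have [lam' [[i1 Hl] Hs]] := IH m w Hnm.
pose lam j := if unlift i0 j is Some i then lam' i
              else - \sum_i lam' i * v (lift i0 i) ord_max * c0^-1.
exists lam; split.
  by exists (lift i0 i1); rewrite /lam liftK.
move=> k; rewrite (bigD1_ord i0) //= /lam unlift_none.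
under eq_bigr do rewrite liftK.
case: (unliftP ord_max k) => [k' ->|->].
  have := Hs k'; rewrite /w /=.
  under eq_bigr do rewrite mulrBr.
  rewrite sumrB => /eqP; rewrite subr_eq0 => /eqP ->.
  rewrite mulNr mulr_suml addrC; apply/eqP; rewrite subr_eq0; apply/eqP.
  by apply: eq_bigr => i _; rewrite !mulrA.
rewrite mulNr mulr_suml addrC; apply/eqP; rewrite subr_eq0; apply/eqP.
by apply: eq_bigr => i _; rewrite -!mulrA mulVr // mulr1.
Qed.

Definition i0 : 'I_2 := ord0.
Definition i1 : 'I_2 := ord_max.
Lemma I2 (i : 'I_2) : i = i0 \/ i = i1.
Proof. by case: i => [[|[|?]] Hi]; [left|right|]; try apply: val_inj. Qed.

Ltac qring := repeat match goal with x : quat R |- _ => destruct x end;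
  apply: quat_ext => /=; ring.

Definition sumform n1 n2 n3 (T : qtensor R n1 n2 n3) r :=
  exists (a : 'I_r -> 'I_n1 -> quat R) (b : 'I_r -> 'I_n2 -> quat R)
         (c : 'I_r -> 'I_n3 -> quat R),
    forall i j k, T i j k = \sum_(l < r) a l i * b l j * c l k.

Lemma sumform_rank r n1 n2 n3 (T : qtensor R n1 n2 n3) : sumform T r -> qrank_le T r.
Proof.
elim: r n1 n2 n3 T => [|r IH] n1 n2 n3 T [a [b [c H]]].
  exists 0%N; split=> //; exists (fun _ => @qtensor_zero R n1 n2 n3); split; first by case.
  by move=> i j k; rewrite H !big_ord0.
pose T' i j k := \sum_(l < r) a (lift ord0 l) i * b (lift ord0 l) j * c (lift ord0 l) k.
have : sumform (T' : qtensor R n1 n2 n3) r.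
  by exists (fun l => a (lift ord0 l)), (fun l => b (lift ord0 l)), (fun l => c (lift ord0 l)).
move/IH => [r' [Hr' [S [HS HT']]]].
pose Z : qtensor R n1 n2 n3 := fun i j k => a ord0 i * b ord0 j * c ord0 k.
have HT : forall i j k, T i j k = Z i j k + T' i j k by move=> i j k; rewrite H big_ord_recl.
case: (classic (Z = @qtensor_zero R n1 n2 n3)) => HZ.
  exists r'; split; first by apply: leqW.
  exists S; split => // i j k; rewrite HT HZ -HT'.
  by rewrite /qtensor_zero add0r.
exists r'.+1; split; first by [].
exists (fun l => if unlift ord0 l is Some l' then S l' else Z); split.
  move=> l; case: (unliftP ord0 l) => [l' _|_] //.
  split => //; by exists (a ord0), (b ord0), (c ord0).
move=> i j k; rewrite big_ord_recl unlift_none HT HT'.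
transitivity (qadd (Z i j k) (\big[@qadd R/qzero R]_(l < r') S l i j k)); first by [].
congr qadd; apply: eq_bigr => l _; by rewrite liftK.
Qed.

Lemma base (T : qtensor R 2 2 3) p q r :
  (forall k, T i1 i1 k = p * T i0 i0 k + q * T i0 i1 k + r * T i1 i0 k) -> sumform T 3.
Proof.
move=> H.
pose x := p + r + r * q; pose y := q + 1.
exists (fun l i => if val l == 0%N then (if val i == 0%N then 1 else y)
                   else if val l == 1%N then (if val i == 0%N then 1 else q)
                   else (if val i == 0%N then 0 else 1)).
exists (fun l j => if val l == 0%N then (if val j == 0%N then 1 else x)
                   else if val l == 1%N then (if val j == 0%N then 0 else 1)
                   else (if val j == 0%N then 1 else r)).
exists (fun l k => if val l == 0%N then T i0 i0 k
                   else if val l == 1%N then T i0 i1 k - x * T i0 i0 k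
                   else T i1 i0 k - y * T i0 i0 k).
move=> i j k; rewrite !big_ord_recr big_ord0 /=.
case: (I2 i) => ->; case: (I2 j) => ->; rewrite /= ?H /x /y;
  move: (T i0 i0 k) (T i0 i1 k) (T i1 i0 k) => A B C; qring.
Qed.

Lemma flip_sf (f g : 'I_2 -> 'I_2) (T : qtensor R 2 2 3) :
  involutive f -> involutive g -> sumform (fun i j k => T (f i) (g j) k) 3 -> sumform T 3.
Proof.
move=> Hf Hg [a [b [c H]]].
exists (fun l i => a l (f i)), (fun l j => b l (g j)), c => i j k.
by rewrite -H Hf Hg.
Qed.

Definition fl (i : 'I_2) : 'I_2 := if val i == 0%N then i1 else i0.
Lemma fl_inv : involutive fl. Proof. by move=> i; case: (I2 i) => ->. Qed.
Lemma id_inv : involutive (@id 'I_2). Proof. by []. Qed.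

Lemma solveX (l X a b c A B C : quat R) : l != 0 -> l * X + (a * A + b * B + c * C) = 0 ->
  X = (-(l^-1 * a)) * A + (-(l^-1 * b)) * B + (-(l^-1 * c)) * C.
Proof.
move=> Hl /eqP; rewrite addr_eq0 => /eqP H.
have Hu : l \is a GRing.unit by rewrite qunitE.
by rewrite -[X](mulKr Hu) H mulrN !mulrDr !opprD !mulNr !mulrA.
Qed.

Lemma sum4 (F : 'I_4 -> quat R) :
  \sum_(i < 4) F i = F (inord 0) + F (inord 1) + F (inord 2) + F (inord 3).
Proof.
rewrite !big_ord_recr big_ord0 /=.
have E : forall u : quat R, 0 + u = u by move=> u; rewrite add0r.
rewrite E.
by congr (_ + _ + _ + _); f_equal; apply: val_inj; rewrite /= inordK.
Qed.

Lemma main223 (T : qtensor R 2 2 3) : sumform T 3.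
Proof.
pose v (r : 'I_4) (k : 'I_3) := match nat_of_ord r with 0 => T i0 i0 k | 1 => T i0 i1 k
   | 2 => T i1 i0 k | _ => T i1 i1 k end.
have hD : forall x : quat R, x != 0 -> x \is a GRing.unit by move=> x; rewrite qunitE.
have [lam [[r0 Hr0] Hs]] := dep_lemma hD v (isT : (3 < 4)%N).
have Hs' : forall k, lam (inord 0) * T i0 i0 k + lam (inord 1) * T i0 i1 k
   + lam (inord 2) * T i1 i0 k + lam (inord 3) * T i1 i1 k = 0.
  by move=> k; rewrite -(Hs k) sum4 /v !inordK.
have Hr : lam (inord 0) != 0 \/ lam (inord 1) != 0 \/ lam (inord 2) != 0 \/ lam (inord 3) != 0.
  case: r0 Hr0 => [[|[|[|[|?]]]] Hr] H //.
  - by left; rewrite (_ : inord 0 = Ordinal Hr) //; apply: val_inj; rewrite /= inordK.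
  - by right; left; rewrite (_ : inord 1 = Ordinal Hr) //; apply: val_inj; rewrite /= inordK.
  - by right; right; left; rewrite (_ : inord 2 = Ordinal Hr) //; apply: val_inj; rewrite /= inordK.
  - by right; right; right; rewrite (_ : inord 3 = Ordinal Hr) //; apply: val_inj; rewrite /= inordK.
move: (lam (inord 0)) (lam (inord 1)) (lam (inord 2)) (lam (inord 3)) Hs' Hr => l0 l1 l2 l3 Hs'.
case=> [H|[H|[H|H]]].

- apply: (flip_sf fl_inv fl_inv).
  apply: (@base _ (-(l0^-1 * l3)) (-(l0^-1 * l2)) (-(l0^-1 * l1))) => k /=.
  refine (solveX H _); rewrite /fl /= -(Hs' k).
  move: (T i0 i0 k) (T i0 i1 k) (T i1 i0 k) (T i1 i1 k) => A B C D; qring.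
- apply: (flip_sf fl_inv id_inv).
  apply: (@base _ (-(l1^-1 * l2)) (-(l1^-1 * l3)) (-(l1^-1 * l0))) => k /=.
  refine (solveX H _); rewrite /fl /= -(Hs' k).
  move: (T i0 i0 k) (T i0 i1 k) (T i1 i0 k) (T i1 i1 k) => A B C D; qring.
- apply: (flip_sf id_inv fl_inv).
  apply: (@base _ (-(l2^-1 * l1)) (-(l2^-1 * l0)) (-(l2^-1 * l3))) => k /=.
  refine (solveX H _); rewrite /fl /= -(Hs' k).
  move: (T i0 i0 k) (T i0 i1 k) (T i1 i0 k) (T i1 i1 k) => A B C D; qring.
- apply: (flip_sf id_inv id_inv).
  apply: (@base _ (-(l3^-1 * l0)) (-(l3^-1 * l1)) (-(l3^-1 * l2))) => k /=.
  refine (solveX H _); rewrite /fl /= -(Hs' k).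
  move: (T i0 i0 k) (T i0 i1 k) (T i1 i0 k) (T i1 i1 k) => A B C D; qring.
Qed.

Definition qconj (q : quat R) := Quat (q0 q) (- q1 q) (- q2 q) (- q3 q).
Lemma qconjM (p q : quat R) : qconj (p * q) = qconj q * qconj p.
Proof. rewrite /qconj; qring. Qed.
Lemma qconjK (p : quat R) : qconj (qconj p) = p.
Proof. rewrite /qconj; qring. Qed.
Lemma qconjD (p q : quat R) : qconj (p + q) = qconj p + qconj q.
Proof. rewrite /qconj; qring. Qed.
Lemma qconj0 : qconj 0 = 0.
Proof. rewrite /qconj; qring. Qed.

Lemma main322 (T : qtensor R 3 2 2) : sumform T 3.
Proof.
have [a [b [c H]]] := main223 (fun i j k => qconj (T k j i)).
exists (fun l i => qconj (c l i)), (fun l j => qconj (b l j)), (fun l k => qconj (a l k)).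
move=> i j k; rewrite -[T i j k]qconjK H.
rewrite (big_morph qconj qconjD qconj0); apply: eq_bigr => l _.
by rewrite !qconjM mulrA.
Qed.
End QR.

Local Close Scope ring_scope.

Theorem mainTheorem8 (R : realType) :
  (forall T : qtensor R 2 2 3, qrank_le T 3) /\
  (forall T : qtensor R 3 2 2, qrank_le T 3).
Proof.
split=> T; apply: sumform_rank; [exact: main223 | exact: main322].
Qed.
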